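(* In the $T$-period model described in the context, with short sales prohibitions (admissible strategies are predictable self-financing with $h_m(t)\ge 0$ for $m\ge 1$), if there is no multi-period arbitrage under model uncertainty, then there exists a weak risk neutral nonlinear expectation: a nonempty family $\mathcal{Q}$ of probability measures on $\Omega$ with $\sup_{Q\in\mathcal{Q}}Q(\omega)>0$ for all $\omega\in\Omega$ such that for all $0\le t\le u\le T$, all $m=1,\dots,M$ and all $\omega\in\Omega$, $$\inf_{Q\in\mathcal{Q},\,Q(\omega)>0}E_Q[S_m^*(u)\mid\mathcal{F}_t](\omega)\le S_m^*(t)(\omega).$$
   Context: Multi-period model: $\Omega=\{\omega_1,\dots,\omega_K\}$ is finite with a filtration $\mathcal{F}_0\subseteq\cdots\subseteq\mathcal{F}_T$, $\mathcal{F}_0$ trivial and $\mathcal{F}_T=2^\Omega$. $\mathcal{P}$ is a nonempty family of probability measures on $\Omega$ with $\sup_{P\in\mathcal{P}}P(\omega)>0$ for all $\omega$. Bond: $S_0(0)=1$, $S_0(t)=(1+r_1)\cdots(1+r_t)$, each $r_t\ge 0$ $\mathcal{F}_{t-1}$-measurable. Risky securities $S_m(t)$ are $\mathcal{F}_t$-measurable with $S_m(0)>0$. Discounted prices $S_m^*(t)=S_m(t)/S_0(t)$, $\Delta S_m^*(t)=S_m^*(t)-S_m^*(t-1)$. A trading strategy $H=(h(t))_{t=1}^T$, $h(t)=(h_0(t),\dots,h_M(t))$ $\mathcal{F}_{t-1}$-measurable; $V^*(0)=h_0(1)+\sum_m h_m(1)S_m^*(0)$, $V^*(t)=h_0(t)+\sum_m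 h_m(t)S_m^*(t)$. $H$ is self-financing if $[h_0(t+1)-h_0(t)]+\sum_m[h_m(t+1)-h_m(t)]S_m^*(t)=0$ for $t=1,\dots,T-1$. An admissible self-financing $H$ is a multi-period arbitrage under model uncertainty if $V^*(0)=0$, $V^*(T)\ge 0$ on $\Omega$, and $\sup_{P\in\mathcal{P}}E_P[V^*(T)]>0$. For $Q$ with $Q(\omega)>0$, $E_Q[X\mid\mathcal{F}_t](\omega)$ is the $Q$-average of $X$ over the $\mathcal{F}_t$-atom containing $\omega$. *)

(* Defs.v *)
From HB Require Import structures.
From mathcomp Require Import all_boot all_order all_algebra.
From mathcomp Require Import boolp classical_sets reals.
Set Implicit Arguments. Unset Strict Implicit. Unset Printing Implicit Defensive.
Import Order.TTheory GRing.Theory Num.Theory.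
Local Open Scope ring_scope.
Local Open Scope classical_set_scope.

Section Market.
Variables (R : realType) (Omega : finType).

(* A filtration F_0 ⊆ ... ⊆ F_T on the finite Omega is given by its atoms:
   atom t w = the F_t-atom containing w. *)
Definition is_filtration (T : nat) (atom : nat -> Omega -> {set Omega}) : Prop :=
  [/\ (forall t w, (t <= T)%N -> w \in atom t w),
      (forall t w w', (t <= T)%N -> w' \in atom t w -> atom t w' = atom t w),
      (forall t w, (t < T)%N -> atom t.+1 w \subset atom t w),
      (forall w, atom 0%N w = finset.setTfor Omega) &
      (forall w, atom T w = finset.set1 w)].

Definition meas_at (atom : nat -> Omega -> {set Omega}) (t : nat) (X : Omega -> R) : Prop :=
  forall w w', w' \in atom t w -> X w' = X w.

Definition is_prob (P : Omega -> R) : Prop :=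
  (forall w, 0 <= P w) /\ \sum_(w : Omega) P w = 1.

Definition expect (P : Omega -> R) (X : Omega -> R) : R := \sum_(w : Omega) P w * X w.

Definition cond_expect (atom : nat -> Omega -> {set Omega}) (Q : Omega -> R)
  (X : Omega -> R) (t : nat) (w : Omega) : R :=
  (\sum_(w' in atom t w) Q w' * X w') / (\sum_(w' in atom t w) Q w').

Definition bond (r : nat -> Omega -> R) (t : nat) (w : Omega) : R :=
  \prod_(1 <= s < t.+1) (1 + r s w).

Variable M : nat.

Definition disc (r : nat -> Omega -> R) (S : 'I_M -> nat -> Omega -> R)
  (m : 'I_M) (t : nat) (w : Omega) : R := S m t w / bond r t w.

Definition market_model (T : nat) (atom : nat -> Omega -> {set Omega})
  (r : nat -> Omega -> R) (S : 'I_M -> nat -> Omega -> R) : Prop :=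
  [/\ (forall t w, (1 <= t <= T)%N -> 0 <= r t w),
      (forall t, (1 <= t <= T)%N -> meas_at atom t.-1 (r t)),
      (forall m t, (t <= T)%N -> meas_at atom t (S m t)) &
      (forall m w, 0 < S m 0%N w)].

Section Strategy.
Variables (T : nat) (atom : nat -> Omega -> {set Omega})
  (r : nat -> Omega -> R) (S : 'I_M -> nat -> Omega -> R).
(* strategy H = (h(t))_{t=1..T}, h(t) = (h0 t, h m t) *)
Variables (h0 : nat -> Omega -> R) (h : 'I_M -> nat -> Omega -> R).

Definition V0 (w : Omega) : R :=
  h0 1%N w + \sum_(m < M) h m 1%N w * disc r S m 0%N w.

Definition Vt (t : nat) (w : Omega) : R :=
  h0 t w + \sum_(m < M) h m t w * disc r S m t w.

Definition predictable : Prop :=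
  forall t, (1 <= t <= T)%N ->
    meas_at atom t.-1 (h0 t) /\ forall m, meas_at atom t.-1 (h m t).

Definition self_financing : Prop :=
  forall t w, (1 <= t <= T.-1)%N ->
    (h0 t.+1 w - h0 t w) + \sum_(m < M) (h m t.+1 w - h m t w) * disc r S m t w = 0.

Definition no_short_sales : Prop :=
  forall m t w, (1 <= t <= T)%N -> 0 <= h m t w.

Definition admissible : Prop := [/\ predictable, self_financing & no_short_sales].

Definition arbitrage_MU (Pset : set (Omega -> R)) : Prop :=
  [/\ admissible,
      (forall w, V0 w = 0),
      (forall w, 0 <= Vt T w) &
      0 < sup [set expect P (Vt T) | P in Pset]].
End Strategy.

Definition no_arbitrage_MU (T : nat) (atom : nat -> Omega -> {set Omega})
  (r : nat -> Omega -> R) (S : 'I_M -> nat -> Omega -> R) (Pset : set (Omega -> R)) : Prop :=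
  ~ exists (h0 : nat -> Omega -> R) (h : 'I_M -> nat -> Omega -> R),
      arbitrage_MU T atom r S h0 h Pset.

Definition prob_family (Pset : set (Omega -> R)) : Prop :=
  [/\ Pset !=set0,
      (forall P, Pset P -> is_prob P) &
      (forall w, 0 < sup [set P w | P in Pset])].

End Market.

(* Main.v *)
Require Import Defs.
From HB Require Import structures.
From mathcomp Require Import all_boot all_order all_algebra.
From mathcomp Require Import boolp classical_sets reals.
From mathcomp Require Import zify ring lra.
Import Order.TTheory GRing.Theory Num.Theory.
Local Open Scope ring_scope.
Local Open Scope classical_set_scope.

Lemma sum_only (R : realType) (I : finType) (P : pred I) (F : I -> R) (i : I) :
  P i -> (forall j, P j -> j != i -> F j = 0) -> \sum_(j | P j) F j = F i.
Proof.
move=> Pi H; rewrite (bigD1 i) //= big1 ?addr0 // => j /andP[Pj ji]; exact: H.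
Qed.

Lemma sum_ge_term (R : realType) (I : finType) (P : pred I) (F : I -> R) (i : I) :
  P i -> (forall j, P j -> 0 <= F j) -> F i <= \sum_(j | P j) F j.
Proof.
move=> Pi H; rewrite (bigD1 i) //= lerDl; apply: sumr_ge0 => j /andP[Pj _]; exact: H.
Qed.

Lemma atom_mono (Omega : finType) T (atom : nat -> Omega -> {set Omega}) a b w :
  is_filtration T atom -> (a <= b <= T)%N -> atom b w \subset atom a w.
Proof.
case=> _ _ H3 _ _ /andP[ab bT]; elim: b ab bT => [|b IH] ab bT.
  by have -> : a = 0%N by lia.
case: (ltnP a b.+1) => h.
  have h1 : (b < T)%N by lia.
  have h2 : (a <= b)%N by lia.
  have h3 : (b <= T)%N by lia.
  exact: fintype.subset_trans (H3 b w h1) (IH h2 h3).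
by have -> : a = b.+1 by lia.
Qed.

Lemma meas_mono (R : realType) (Omega : finType) T (atom : nat -> Omega -> {set Omega}) a b (X : Omega -> R) :
  is_filtration T atom -> (a <= b <= T)%N -> meas_at atom a X -> meas_at atom b X.
Proof.
move=> F ab H w w' ww; apply: H; exact: (fintype.subsetP (@atom_mono _ _ _ _ _ w F ab)).
Qed.

Lemma mem_atom_meas (Omega : finType) T (atom : nat -> Omega -> {set Omega}) t s w0 w w' :
  is_filtration T atom -> (t <= s <= T)%N -> w' \in atom s w ->
  (w' \in atom t w0) = (w \in atom t w0).
Proof.
move=> F ts ww; have tT : (t <= T)%N by lia.
have w't : w' \in atom t w by exact: (fintype.subsetP (@atom_mono _ _ _ _ _ w F ts)).
case: F => H1 H2 _ _ _.
apply/idP/idP => h.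
- have e1 := H2 _ _ _ tT h; have e2 := H2 _ _ _ tT w't.
  by rewrite -e1 e2 H1.
- by rewrite -(H2 _ _ _ tT h).
Qed.

Lemma sum_only_all (R : realType) (I : finType) (F : I -> R) (i : I) :
  (forall j, j != i -> F j = 0) -> \sum_j F j = F i.
Proof.
move=> H; rewrite (bigD1 i) //= big1 ?addr0 // => j ji; exact: H.
Qed.

Lemma bond_meas (R : realType) (Omega : finType) T M (atom : nat -> Omega -> {set Omega})
  (r : nat -> Omega -> R) (S : 'I_M -> nat -> Omega -> R) t :
  is_filtration T atom -> market_model T atom r S -> (t <= T)%N -> meas_at atom t (bond r t).
Proof.
move=> F [_ Hr _ _] tT w w' ww; rewrite /bond; apply: eq_big_nat => s /andP[s1 st].
have sT : (1 <= s <= T)%N by lia.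
congr (1 + _); apply: (Hr s sT).
have h : (s.-1 <= t <= T)%N by lia.
exact: (fintype.subsetP (@atom_mono _ _ _ _ _ w F h)).
Qed.

Lemma disc_meas (R : realType) (Omega : finType) T M (atom : nat -> Omega -> {set Omega})
  (r : nat -> Omega -> R) (S : 'I_M -> nat -> Omega -> R) m t :
  is_filtration T atom -> market_model T atom r S -> (t <= T)%N -> meas_at atom t (disc r S m t).
Proof.
move=> F MM tT w w' ww; rewrite /disc (@bond_meas _ _ _ _ _ _ _ _ F MM tT _ _ ww).
by case: MM => _ _ HS _; rewrite (HS m t tT w w' ww).
Qed.

Lemma prob_le1 (R : realType) (Omega : finType) (P : Omega -> R) v :
  is_prob P -> P v <= 1.
Proof.
case=> P0 P1; rewrite -P1; apply: (@sum_ge_term _ _ xpredT) => //.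
Qed.

Lemma NA_lemma (R : realType) (Omega : finType) (T M : nat)
  (atom : nat -> Omega -> {set Omega})
  (r : nat -> Omega -> R) (S : 'I_M -> nat -> Omega -> R)
  (Pset : set (Omega -> R)) :
  (1 <= T)%N ->
  is_filtration T atom ->
  market_model T atom r S ->
  prob_family Pset ->
  no_arbitrage_MU T atom r S Pset ->
  forall t u m w, (t <= u <= T)%N ->
  exists2 w', w' \in atom t w & disc r S m u w' <= disc r S m t w.
Proof.
move=> T1 F MM PF NA t u m w tu.
have tT : (t <= T)%N by lia.
have uT : (u <= T)%N by lia.
case: (eqVneq t u) => [<-|tnu].
  by exists w => //; case: F => H1 *; apply: H1.
have tlu : (t < u)%N by lia.
case: (pselect (exists2 w', w' \in atom t w & disc r S m u w' <= disc r S m t w)) => // Hn.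
exfalso.
set A := atom t w; set c := disc r S m t w.
have HA : forall v, v \in A -> c < disc r S m u v.
  move=> v vA; rewrite ltNge; apply/negP => le; apply: Hn; by exists v.
have cA : forall v, v \in A -> disc r S m t v = c.
  by move=> v vA; apply: (@disc_meas _ _ _ _ _ _ _ _ _ F MM tT).
pose g s v : R := if (t < s <= u)%N && (v \in A) then 1 else 0.
pose h m' s v : R := if m' == m then g s v else 0.
pose h0 s v : R := if (v \in A) && (t < s)%N then
   (if (s <= u)%N then - c else disc r S m u v - c) else 0.
have sumh : forall s v (f : 'I_M -> R), \sum_(m' < M) h m' s v * f m' = g s v * f m.
  move=> s v f; rewrite (@sum_only_all _ _ _ m); first by rewrite /h eqxx.
  by move=> j jm; rewrite /h (negbTE jm) mul0r.
have VT : forall v, Vt r S h0 h T v = if v \in A then disc r S m u v - c else 0.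
  move=> v; rewrite /Vt sumh /h0 /g.
  case vA: (v \in A) => /=; last by rewrite andbF mul0r addr0.
  have -> : (t < T)%N by lia.
  rewrite andbT /=; case: ifPn => uT'.
    have -> : T = u by lia.
    rewrite mul1r; lra.
  rewrite mul0r addr0; done.
apply: NA; exists h0, h; split.
- split.
  + move=> s /andP[s1 sT]; split.
    * move=> v v' vv; rewrite /h0.
      case: (ltnP t s) => ts; last by rewrite !andbF.
      have ts' : (t <= s.-1 <= T)%N by lia.
      rewrite (@mem_atom_meas _ _ _ _ _ _ _ _ F ts' vv).
      case: ifP => // _; case: ifPn => // su.
      have us : (u <= s.-1 <= T)%N by lia.
      by rewrite (@meas_mono _ _ _ _ _ _ _ F us (@disc_meas _ _ _ _ _ _ _ m u F MM uT) _ _ vv).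
    * move=> m' v v' vv; rewrite /h /g; case: (m' == m) => //.
      case: (ltnP t s) => ts; last by [].
      have ts' : (t <= s.-1 <= T)%N by lia.
      by rewrite (@mem_atom_meas _ _ _ _ _ _ _ _ F ts' vv).
  + move=> tau v /andP[tau1 tauT].
    rewrite (@sum_only_all _ _ _ m); last first.
      by move=> j jm; rewrite /h (negbTE jm) subrr mul0r.
    rewrite /h eqxx /h0 /g.
    case vA: (v \in A) => /=; last by rewrite !andbF subrr mul0r addr0.
    rewrite !andbT.
    case: (ltngtP tau t) => ht.
    * try (have -> : (t < tau.+1)%N = false by lia).
      try (have -> : (t < tau)%N = false by lia).
      rewrite /=; lra.
    * try (have -> : (t < tau.+1)%N by lia).
      try (have -> : (t < tau)%N by lia).
      rewrite /=; case: (ltngtP tau u) => hu.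
      - try (have -> : (tau.+1 <= u)%N by lia).
        try (have -> : (tau <= u)%N by lia).
        rewrite /=; lra.
      - try (have -> : (tau.+1 <= u)%N = false by lia).
        try (have -> : (tau <= u)%N = false by lia).
        rewrite /=; lra.
      - subst tau; try (have -> : (u.+1 <= u)%N = false by lia).
        rewrite /=; lra.
    * subst tau; try (have -> : (t < t.+1)%N by lia).
      rewrite tlu /= (cA v vA); lra.
  + move=> m' s v _; rewrite /h /g; case: (m' == m) => //; case: ifP => //.
- move=> v; rewrite /V0 sumh /h0 /g.
  case vA: (v \in A) => /=; last by rewrite andbF mul0r addr0.
  case: (posnP t) => t0; last first.
    have -> : (t < 1)%N = false by lia.
    rewrite /= ?andbF; lra.
  subst t; have -> : (1 <= u)%N by lia.
  rewrite /=; have := cA v vA; rewrite /c => <-.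
  lra.
- by move=> v; rewrite VT; case: ifP => // vA; apply/ltW; rewrite subr_gt0 HA.
- case: PF => [[P0 HP0] Pprob Psup].
  have [_ [P PP <-] Pw] : exists2 y, [set P w | P in Pset] y & 0 < y.
    by apply: sup_gt => //; exists (P0 w), P0.
  have wA : w \in A by case: F => H1 *; apply: H1.
  have hub : has_ubound [set expect P (Vt r S h0 h T) | P in Pset].
    exists (\sum_v `|Vt r S h0 h T v|) => _ [Q QP <-]; rewrite /expect.
    apply: ler_sum => v _; rewrite (le_trans (ler_norm _)) // normrM.
    have [Q0 _] := Pprob Q QP.
    rewrite ger0_norm //; apply: ler_piMl => //; exact: prob_le1 (Pprob Q QP).
  apply: (lt_le_trans _ (ub_le_sup hub _)); last by exists P.
  have [Pn _] := Pprob P PP.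
  apply: (lt_le_trans _ (@sum_ge_term _ _ xpredT (fun v => P v * Vt r S h0 h T v) w _ _)) => //.
    by rewrite VT wA mulr_gt0 // subr_gt0 HA.
  by move=> v _; rewrite VT; case: ifP => // vA; rewrite mulr_ge0 // subr_ge0 ltW // HA.
Qed.

Lemma two_point (R : realType) (I : finType) (P : pred I) (a b : R) (i j : I) (F : I -> R) :
  P i -> P j ->
  \sum_(v | P v) (a * (v == i)%:R + b * (v == j)%:R) * F v = a * F i + b * F j.
Proof.
move=> Pi Pj.
rewrite (eq_bigr (fun v => a * ((v == i)%:R * F v) + b * ((v == j)%:R * F v))); last first.
  by move=> v _; ring.
rewrite big_split /= -!mulr_sumr.
rewrite (@sum_only _ _ P _ i) //; last by move=> k _ ki; rewrite (negbTE ki) mul0r.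
rewrite (@sum_only _ _ P _ j) //; last by move=> k _ kj; rewrite (negbTE kj) mul0r.
by rewrite !eqxx !mul1r.
Qed.

Theorem mainTheorem7 (R : realType) (Omega : finType) (T M : nat)
  (atom : nat -> Omega -> {set Omega})
  (r : nat -> Omega -> R) (S : 'I_M -> nat -> Omega -> R)
  (Pset : set (Omega -> R)) :
  (1 <= T)%N ->
  is_filtration T atom ->
  market_model T atom r S ->
  prob_family Pset ->
  no_arbitrage_MU T atom r S Pset ->
  exists Qset : set (Omega -> R),
    prob_family Qset /\
    forall (t u : nat) (m : 'I_M) (w : Omega), (t <= u <= T)%N ->
      inf [set cond_expect atom Q (disc r S m u) t w | Q in Qset `&` [set Q | 0 < Q w]]
        <= disc r S m t w.
Proof.
move=> T1 F MM PF NA.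
have Qe_prob : forall (ws w : Omega) (e : R), 0 < e < 1 ->
    is_prob (fun v => (1 - e) * (v == ws)%:R + e * (v == w)%:R).
  move=> ws w e /andP[e0 e1]; split.
    move=> v.
    by apply: addr_ge0; apply: mulr_ge0 => //; lra.
  have H := @two_point R Omega xpredT (1 - e) e ws w (fun _ => 1) isT isT.
  apply: (@eq_trans _ _ ((1 - e) * 1 + e * 1)); last lra.
  rewrite -H; apply: eq_bigr => v _; by rewrite mulr1.
exists [set Q | is_prob Q]; split.
- split.
  + by case: PF => [[P PP] Pprob _]; exists P; exact: Pprob.
  + by [].
  + move=> w.
    have dp := Qe_prob w w (1/2).
    apply: (lt_le_trans ltr01); apply: ub_le_sup.
      by exists 1 => _ [Q QP <-]; exact: prob_le1.
    exists (fun v => (1 - 1/2) * (v == w)%:R + 1/2 * (v == w)%:R); last first. rewrite eqxx /=; lra.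
    by apply: dp; apply/andP; split; lra.
- move=> t u m w tu.
  have [ws wsA le] := @NA_lemma _ _ _ _ _ _ _ _ T1 F MM PF NA t u m w tu.
  have tT : (t <= T)%N by lia.
  have wA : w \in atom t w by case: F => H1 *; apply: H1.
  set X := disc r S m u.
  set E := [set cond_expect atom Q X t w | Q in _].
  pose K := \sum_v `|X v|.
  have hlb : has_lbound E.
    exists (- K) => _ [Q [Qp Qw] <-]; rewrite /cond_expect.
    have [Q0 _] := Qp.
    have D0 : 0 < \sum_(v in atom t w) Q v.
      apply: (lt_le_trans Qw); exact: (@sum_ge_term _ _ (fun v => v \in atom t w)).
    rewrite ler_pdivlMr // mulr_sumr; apply: ler_sum => v _.
    rewrite mulrC; apply: ler_wpM2l => //.
    rewrite lerNl; apply: (le_trans (ler_norm _)); rewrite normrN.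
    exact: (@sum_ge_term _ _ xpredT (fun v => `|X v|)).
  apply/ler_addgt0Pr => e e0.
  pose d := `|X w - X ws| + 1.
  have d0 : 0 < d by rewrite /d; have := normr_ge0 (X w - X ws); lra.
  pose eps := e / (e + d).
  have eps0 : 0 < eps by apply: divr_gt0 => //; lra.
  have eps1 : eps < 1 by rewrite /eps ltr_pdivrMr; lra.
  have epsd : eps * d <= e by rewrite /eps mulrAC ler_pdivrMr; [nra | lra].
  pose Q := fun v => (1 - eps) * (v == ws)%:R + eps * (v == w)%:R.
  have QE : E (cond_expect atom Q X t w).
    exists Q => //; split; first by apply: Qe_prob; apply/andP; split; lra.
    change (0 < (1 - eps) * (w == ws)%:R + eps * (w == w)%:R); rewrite eqxx /=; case: (w == ws) => /=; lra.
  apply: (le_trans (ge_inf hlb QE)).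
  rewrite /cond_expect /Q.
  rewrite (@two_point R Omega (fun v => v \in atom t w) _ _ ws w X) //.
  have H := @two_point R Omega (fun v => v \in atom t w) (1 - eps) eps ws w (fun _ => 1) wsA wA.
  have -> : \sum_(v in atom t w) ((1 - eps) * (v == ws)%:R + eps * (v == w)%:R) = 1.
    apply: (@eq_trans _ _ ((1 - eps) * 1 + eps * 1)); last lra.
    rewrite -H; apply: eq_bigr => v _; by rewrite mulr1.
  rewrite divr1.
  have : eps * (X w - X ws) <= eps * d.
    apply: ler_wpM2l; first lra.
    rewrite /d; have := ler_norm (X w - X ws); lra.
  have le2 : X ws <= disc r S m t w := le.
  rewrite mulrBr mulrBl mul1r; lra.
Qed.
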